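(* Let $k\geqslant 2$ be an integer, and in the braid group $B_5$ let $\delta_3=\sigma_2\sigma_1$, $\Delta_3=\sigma_2\sigma_1\sigma_2$ and $\beta_k=\delta_3^{3k+1}\sigma_4^{2k+2}\sigma_3\sigma_4^{2k-1}$. Then the left normal form of $\beta_k$ is \[\beta_k=(\Delta_3\sigma_4)^{2k}(\delta_3\sigma_4\sigma_3\sigma_4)(\sigma_3\sigma_4)(\sigma_4)^{2k-3}.\] In particular $\inf\beta_k=0$ and $\sup\beta_k=4k-1$.
   Context: $B_5$ has generators $\sigma_1,\dots,\sigma_4$ with the standard braid relations; $B_5^+$ is the positive braid monoid, $\Delta=(\sigma_1\sigma_2\sigma_3\sigma_4)(\sigma_1\sigma_2\sigma_3)(\sigma_1\sigma_2)\sigma_1$. Write $x\preccurlyeq y$ iff $x^{-1}y\in B_5^+$; simple braids are those $x$ with $1\preccurlyeq x\preccurlyeq\Delta$. Simple $s_1,s_2$ are left-weighted if no generator $\sigma_i$ makes both $s_1\sigma_i$ and $\sigma_i^{-1}s_2$ simple. The left normal form of $x$ is the unique expression $x=\Delta^p x_1\cdots x_r$ with $x_i$ simple, different from $1$ and $\Delta$, and consecutive factors left-weighted; $\inf x=p$ and $\sup x=p+r$. *)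

(* Defs.v *)
(* Braid group B_5 presented by words in sigma_1..sigma_4
   and their inverses, modulo the congruence generated by free cancellation
   and the standard braid relations. *)
From mathcomp Require Import all_boot.
From mathcomp Require Import ssralg ssrint.

Set Implicit Arguments.
Unset Strict Implicit.
Unset Printing Implicit Defensive.

(* generator sigma_{i+1} is represented by i : 'I_4 *)
Definition gen := 'I_4.
(* a letter (g, false) is sigma_g, (g, true) is sigma_g^{-1} *)
Definition letter := (gen * bool)%type.
Definition word := seq letter.

Definition pos (g : gen) : letter := (g, false).
Definition sg (i : nat) : word := [:: pos (inord i.-1)].

Definition winv (w : word) : word := rev (map (fun l => (l.1, ~~ l.2)) w).
Definition wpow (w : word) (n : nat) : word := flatten (nseq n w).

Inductive beq : word -> word -> Prop :=
| beq_refl w : beq w w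
| beq_sym u v : beq u v -> beq v u
| beq_trans u v w : beq u v -> beq v w -> beq u w
| beq_cat u u' v v' : beq u u' -> beq v v' -> beq (u ++ v) (u' ++ v')
| beq_free (g : gen) (b : bool) : beq [:: (g, b); (g, ~~ b)] [::]
| beq_comm (i j : gen) : (i.+1 < j)%N -> beq [:: pos i; pos j] [:: pos j; pos i]
| beq_braid (i j : gen) : (val j = (val i).+1)%N ->
    beq [:: pos i; pos j; pos i] [:: pos j; pos i; pos j].

Definition positive (x : word) : Prop :=
  exists w : seq gen, beq x (map pos w).

Definition prec (x y : word) : Prop := positive (winv x ++ y).

Definition Delta : word :=
  sg 1 ++ sg 2 ++ sg 3 ++ sg 4 ++ sg 1 ++ sg 2 ++ sg 3 ++ sg 1 ++ sg 2 ++ sg 1.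

Definition simple (x : word) : Prop := prec [::] x /\ prec x Delta.

Definition left_weighted (s1 s2 : word) : Prop :=
  forall g : gen, ~ (simple (s1 ++ [:: pos g]) /\ simple (winv [:: pos g] ++ s2)).

Definition Delta_pow (p : int) : word :=
  match p with
  | Posz n => wpow Delta n
  | Negz n => wpow (winv Delta) n.+1
  end.

Definition is_LNF (x : word) (p : int) (fs : seq word) : Prop :=
  beq x (Delta_pow p ++ flatten fs) /\
  (forall s, s \in fs -> simple s /\ ~ beq s [::] /\ ~ beq s Delta) /\
  (forall i, (i.+1 < size fs)%N -> left_weighted (nth [::] fs i) (nth [::] fs i.+1)).

(* inf x = p and sup x = p + r, read off the (unique) left normal form *)
Definition has_inf (x : word) (p : int) : Prop := exists fs, is_LNF x p fs.
Definition has_sup (x : word) (s : int) : Prop :=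
  exists p fs, is_LNF x p fs /\ s = (p + (size fs)%:Z)%R.

Definition delta3 : word := sg 2 ++ sg 1.
Definition Delta3 : word := sg 2 ++ sg 1 ++ sg 2.

Definition beta (k : nat) : word :=
  wpow delta3 (3 * k + 1) ++ wpow (sg 4) (2 * k + 2) ++ sg 3 ++ wpow (sg 4) (2 * k - 1).

Definition beta_factors (k : nat) : seq word :=
  nseq (2 * k) (Delta3 ++ sg 4) ++
  [:: delta3 ++ sg 4 ++ sg 3 ++ sg 4; sg 3 ++ sg 4] ++
  nseq (2 * k - 3) (sg 4).

(* Main.v *)
Require Import Defs.
From mathcomp Require Import all_boot.
From mathcomp Require Import ssralg ssrint.
From Stdlib Require Import Setoid Lia.
From mathcomp Require Import zify.

Set Implicit Arguments.
Unset Strict Implicit.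
Unset Printing Implicit Defensive.

Add Parametric Relation : word beq
  reflexivity proved by beq_refl
  symmetry proved by beq_sym
  transitivity proved by beq_trans as beq_rel.

Add Parametric Morphism : (@cat letter) with signature beq ==> beq ==> beq as cat_mor.
Proof. move=> x y H u v H'; exact: beq_cat. Qed.

Definition posn (n : nat) : letter := pos (inord n).
Definition W (s : seq nat) : word := map posn s.

Definition basic (u v : seq nat) : bool :=
  match u, v with
  | i :: j :: r, i' :: j' :: r' =>
      [&& i == j', j == i', r == r', i < 4, j < 4 & (i.+1 < j) || (j.+1 < i)]
      || match r, r' with
         | a :: r1, b :: r1' =>
           [&& i == j', j == i', a == i, b == j, r1 == r1', i < 4, j < 4 &
               (j == i.+1) || (i == j.+1)]
         | _, _ => false
         end
  | _, _ => false
  end.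

Fixpoint rel_at (u v : seq nat) (p : nat) {struct p} : bool :=
  match p with
  | 0 => basic u v
  | p'.+1 => match u, v with
             | x :: u', y :: v' => (x == y) && rel_at u' v' p'
             | _, _ => false
             end
  end.

Fixpoint chain (u : seq nat) (l : seq (seq nat)) : bool :=
  match l with
  | [::] => true
  | v :: l' => has (rel_at u v) (iota 0 (size u)) && chain v l'
  end.

Lemma inordv (i : nat) : i < 4 -> nat_of_ord (inord i : 'I_4) = i.
Proof. by move=> h; rewrite inordK. Qed.

Lemma inordval (i : nat) : i < 4 -> \val (inord i : 'I_4) = i.
Proof. exact: inordv. Qed.

Lemma basic_sound u v : basic u v -> beq (W u) (W v).
Proof.
case: u => [|i [|j r]] //; case: v => [|i' [|j' r']] //=.
case/orP.
  case/and5P=> /eqP <- /eqP <- /eqP <- hi /andP [hj h].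
  change (beq ([:: posn i; posn j] ++ W r) ([:: posn j; posn i] ++ W r)).
  apply: beq_cat; last exact: beq_refl.
  case/orP: h => h.
    by apply: beq_comm; rewrite !inordv.
  by apply: beq_sym; apply: beq_comm; rewrite !inordv.
case: r => [|a r1] //; case: r' => [|b r1'] //.
case/and5P=> /eqP <- /eqP <- /eqP -> /eqP -> /and4P [/eqP <- hi hj h].
change (beq ([:: posn i; posn j; posn i] ++ W r1) ([:: posn j; posn i; posn j] ++ W r1)).
apply: beq_cat; last exact: beq_refl.
case/orP: h => /eqP h.
  by apply: beq_braid; rewrite !inordval.
by apply: beq_sym; apply: beq_braid; rewrite !inordval.
Qed.

Lemma rel_at_sound p u v : rel_at u v p -> beq (W u) (W v).
Proof.
elim: p u v => [|p IH] u v; first exact: basic_sound.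
rewrite /=.
case: u => [|x u] //; case: v => [|y v] // /andP [/eqP <- h].
change (beq ([:: posn x] ++ W u) ([:: posn x] ++ W v)).
apply: beq_cat; [exact: beq_refl | exact: IH].
Qed.

Lemma chain_sound u l : chain u l -> beq (W u) (W (last u l)).
Proof.
elim: l u => [|v l IH] u /=; first by move=> _; exact: beq_refl.
case/andP=> /hasP [p _ hp] hc.
apply: beq_trans (rel_at_sound hp) (IH _ hc).
Qed.

Lemma chain_beq u v l : chain u l && (last u l == v) -> beq (W u) (W v).
Proof. by case/andP=> h /eqP <-; exact: chain_sound. Qed.

Lemma I1 : beq (W [:: 1; 0; 1; 0; 1; 0]) (W [:: 1; 0; 1; 1; 0; 1]).
Proof. by apply: (@chain_beq _ _ [:: [:: 1; 0; 1; 1; 0; 1]]). Qed.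
Lemma I2 : beq (W [:: 1; 0; 1; 3]) (W [:: 3; 1; 0; 1]).
Proof. by apply: (@chain_beq _ _ [:: [:: 1; 0; 3; 1]; [:: 1; 3; 0; 1]; [:: 3; 1; 0; 1]]). Qed.
Lemma I3 : beq (W [:: 1; 0; 3]) (W [:: 3; 1; 0]).
Proof. by apply: (@chain_beq _ _ [:: [:: 1; 3; 0]; [:: 3; 1; 0]]). Qed.
Lemma I4 : beq (W [:: 1; 0; 3; 3; 2; 3; 3]) (W [:: 1; 0; 3; 2; 3; 2; 3]).
Proof. by apply: (@chain_beq _ _ [:: [:: 1; 0; 3; 2; 3; 2; 3]]). Qed.

Definition T5 := (nat * nat * nat * nat * nat)%type.

Definition swapn (n : nat) (P : T5) : T5 :=
  let: (a, b, c, d, e) := P in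
  match n with
  | 0 => (b, a, c, d, e)
  | 1 => (a, c, b, d, e)
  | 2 => (a, b, d, c, e)
  | _ => (a, b, c, e, d)
  end.

Definition Fperm (P : T5) (w : word) : T5 :=
  foldl (fun P l => swapn (nat_of_ord l.1) P) P w.
Definition npos (w : word) := count (fun l : letter => ~~ l.2) w.
Definition nneg (w : word) := count (fun l : letter => l.2) w.

Lemma Fcat P u v : Fperm P (u ++ v) = Fperm (Fperm P u) v.
Proof. exact: foldl_cat. Qed.

Lemma swapnK n P : swapn n (swapn n P) = P.
Proof. by case: P => [[[[a b] c] d] e]; case: n => [|[|[|[|n]]]]. Qed.

Lemma beq_inv u v : beq u v ->
  (forall P, Fperm P u = Fperm P v) /\ npos u + nneg v = npos v + nneg u.
Proof.
elim=> {u v}.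
- by move=> w; split.
- by move=> u v _ [H1 H2]; split => // P; rewrite H1.
- move=> u v w _ [H1 H2] _ [H3 H4]; split; first by move=> P; rewrite H1 H3.
  lia.
- move=> u u' v v' _ [H1 H2] _ [H3 H4]; split.
    by move=> P; rewrite !Fcat H1 H3.
  rewrite /npos /nneg !count_cat -/(npos u) -/(npos u') -/(nneg u) -/(nneg u').
  rewrite -/(npos v) -/(npos v') -/(nneg v) -/(nneg v'). lia.
- move=> g b; split; first by move=> P; rewrite /Fperm /= swapnK.
  by case: b.
- move=> i j h; split => //= P.
  case: P => [[[[a b] c] d] e].
  case: i h => [[|[|[|[|i]]]] hi] //=; case: j => [[|[|[|[|j]]]] hj] //=.
- move=> i j h; split => //= P.
  case: P => [[[[a b] c] d] e].
  case: i h => [[|[|[|[|i]]]] hi] //=; case: j => [[|[|[|[|j]]]] hj] //=.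
Qed.

Definition inv5 (P : T5) : nat :=
  let: (a, b, c, d, e) := P in
  (b < a) + (c < a) + (d < a) + (e < a) + (c < b) + (d < b) + (e < b)
  + (d < c) + (e < c) + (e < d).

Definition tup (s : seq nat) : T5 :=
  (nth 0 s 0, nth 0 s 1, nth 0 s 2, nth 0 s 3, nth 0 s 4).
Definition allperms : seq T5 := map tup (permutations (iota 0 5)).
Definition id5 : T5 := (0, 1, 2, 3, 4).

Lemma step_check :
  all (fun P => all (fun n => (swapn n P \in allperms) && (inv5 (swapn n P) <= (inv5 P).+1))
                    (iota 0 4)) allperms.
Proof. by vm_compute. Qed.

Lemma pos_inv (w : seq gen) P : P \in allperms ->
  inv5 (Fperm P (map pos w)) <= inv5 P + size w.
Proof.
elim: w P => [|g w IH] P hP /=; first by rewrite addn0.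
have := allP step_check P hP => /allP /(_ (nat_of_ord g)).
rewrite mem_iota /= ltn_ord => /(_ isT) /andP [h1 h2].
have := IH _ h1. rewrite /Fperm /=. lia.
Qed.

Definition okP (x : word) : bool := inv5 (Fperm id5 x) + nneg x <= npos x.

Lemma okP_pos x : positive x -> okP x.
Proof.
case=> w /beq_inv [H1 H2].
rewrite /okP H1.
have E1 : npos (map pos w) = size w by rewrite /npos count_map; exact: count_predT.
have E2 : nneg (map pos w) = 0 by rewrite /nneg count_map; exact: count_pred0.
have := @pos_inv w id5 isT. rewrite E1 E2 in H2. 
have -> : inv5 id5 = 0 by []. lia.
Qed.

Lemma winv_cancel s : beq (winv s ++ s) [::].
Proof.
elim: s => [|[g b] s IH]; first exact: beq_refl.
rewrite /winv /= rev_cons -cats1 -/(winv s) -catA.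
have F : beq ([:: (g, ~~ b)] ++ (g, b) :: s) s.
  by case: b; [exact: (beq_cat (beq_free g false) (beq_refl s)) | exact: (beq_cat (beq_free g true) (beq_refl s))].
by rewrite F.
Qed.

Add Parametric Morphism : positive with signature beq ==> iff as pos_mor.
Proof.
move=> x y h; split; case=> w hw; exists w.
  exact: beq_trans (beq_sym h) hw.
exact: beq_trans h hw.
Qed.

Lemma positiveW s : positive (W s).
Proof. by exists (map inord s); rewrite /W -map_comp; exact: beq_refl. Qed.

Definition DeltaW := [:: 0; 1; 2; 3; 0; 1; 2; 0; 1; 0].
Lemma DeltaE : Delta = W DeltaW. Proof. by []. Qed.

Lemma simpleW s t : beq (W (s ++ t)) Delta -> simple (W s).
Proof.
move=> h; split; first exact: positiveW.
rewrite /prec -h /W map_cat -/(W s) -/(W t) catA winv_cancel /=.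
exact: positiveW.
Qed.

Lemma npos_W s : npos (W s) = size s.
Proof. by rewrite /npos count_map; exact: count_predT. Qed.
Lemma nneg_W s : nneg (W s) = 0.
Proof. by rewrite /nneg count_map; exact: count_pred0. Qed.

Lemma nontriv s s' : size s != size s' -> ~ beq (W s) (W s').
Proof.
move=> hs /beq_inv [_]; rewrite !npos_W !nneg_W; move: hs; lia.
Qed.

Definition fA := [:: 1; 0; 1; 3].
Definition fB := [:: 1; 0; 3; 2; 3].
Definition fC := [:: 2; 3].
Definition fD := [:: 3].

Lemma goodW s t l : chain (s ++ t) l && (last (s ++ t) l == DeltaW) ->
  (size s != 0) && (size s != 10) ->
  simple (W s) /\ ~ beq (W s) [::] /\ ~ beq (W s) Delta.
Proof.
move=> h /andP [h1 h2]; split; first exact: (simpleW (chain_beq h)).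
split; first exact: (@nontriv s [::]).
rewrite DeltaE; exact: nontriv.
Qed.

Lemma goodA : simple (W fA) /\ ~ beq (W fA) [::] /\ ~ beq (W fA) Delta.
Proof.
apply: (@goodW _ [:: 2; 3; 1; 2; 0; 1] [:: [:: 0; 1; 0; 3; 2; 3; 1; 2; 0; 1]; [:: 0; 1; 0; 2; 3; 2; 1; 2; 0; 1]; [:: 0; 1; 2; 0; 3; 2; 1; 2; 0; 1]; [:: 0; 1; 2; 3; 0; 2; 1; 2; 0; 1]; [:: 0; 1; 2; 3; 0; 1; 2; 1; 0; 1]; [:: 0; 1; 2; 3; 0; 1; 2; 0; 1; 0]]); by vm_compute.
Qed.
Lemma goodB : simple (W fB) /\ ~ beq (W fB) [::] /\ ~ beq (W fB) Delta.
Proof.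
apply: (@goodW _ [:: 1; 2; 3; 0; 1] [:: [:: 1; 0; 2; 3; 2; 1; 2; 3; 0; 1]; [:: 1; 0; 2; 3; 1; 2; 1; 3; 0; 1]; [:: 1; 0; 2; 1; 3; 2; 1; 3; 0; 1]; [:: 1; 0; 2; 1; 3; 2; 3; 1; 0; 1]; [:: 1; 0; 2; 1; 2; 3; 2; 1; 0; 1]; [:: 1; 0; 1; 2; 1; 3; 2; 1; 0; 1]; [:: 0; 1; 0; 2; 1; 3; 2; 1; 0; 1]; [:: 0; 1; 2; 0; 1; 3; 2; 1; 0; 1]; [:: 0; 1; 2; 0; 3; 1; 2; 1; 0; 1]; [:: 0; 1; 2; 3; 0; 1; 2; 1; 0; 1]; [:: 0; 1; 2; 3; 0; 1; 2; 0; 1; 0]]); by vm_compute.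
Qed.
Lemma goodC : simple (W fC) /\ ~ beq (W fC) [::] /\ ~ beq (W fC) Delta.
Proof.
apply: (@goodW _ [:: 0; 1; 2; 3; 0; 1; 2; 0] [:: [:: 2; 0; 3; 1; 2; 3; 0; 1; 2; 0]; [:: 0; 2; 3; 1; 2; 3; 0; 1; 2; 0]; [:: 0; 2; 1; 3; 2; 3; 0; 1; 2; 0]; [:: 0; 2; 1; 2; 3; 2; 0; 1; 2; 0]; [:: 0; 1; 2; 1; 3; 2; 0; 1; 2; 0]; [:: 0; 1; 2; 3; 1; 2; 0; 1; 2; 0]; [:: 0; 1; 2; 3; 1; 0; 2; 1; 2; 0]; [:: 0; 1; 2; 3; 1; 0; 1; 2; 1; 0]; [:: 0; 1; 2; 3; 0; 1; 0; 2; 1; 0]; [:: 0; 1; 2; 3; 0; 1; 2; 0; 1; 0]]); by vm_compute.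
Qed.
Lemma goodD : simple (W fD) /\ ~ beq (W fD) [::] /\ ~ beq (W fD) Delta.
Proof.
apply: (@goodW _ [:: 0; 1; 2; 3; 0; 1; 2; 0; 1] [:: [:: 0; 3; 1; 2; 3; 0; 1; 2; 0; 1]; [:: 0; 1; 3; 2; 3; 0; 1; 2; 0; 1]; [:: 0; 1; 2; 3; 2; 0; 1; 2; 0; 1]; [:: 0; 1; 2; 3; 0; 2; 1; 2; 0; 1]; [:: 0; 1; 2; 3; 0; 1; 2; 1; 0; 1]; [:: 0; 1; 2; 3; 0; 1; 2; 0; 1; 0]]); by vm_compute.
Qed.

Definition Ln (x : nat * bool) : letter := (inord x.1, x.2).
Definition Pn (s : seq nat) : seq (nat * bool) := map (fun n => (n, false)) s.
Definition winvN (t : seq (nat * bool)) := rev (map (fun l => (l.1, ~~ l.2)) t).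
Definition FN (P : T5) (t : seq (nat * bool)) : T5 := foldl (fun P l => swapn l.1 P) P t.
Definition okN (t : seq (nat * bool)) : bool :=
  inv5 (FN id5 t) + count snd t <= count (fun l => ~~ l.2) t.

Lemma WE s : W s = map Ln (Pn s).
Proof. by rewrite /Pn -map_comp. Qed.

Lemma winvE t : winv (map Ln t) = map Ln (winvN t).
Proof. by rewrite /winv /winvN map_rev -!map_comp. Qed.

Lemma FE P t : all (fun l => l.1 < 4) t -> Fperm P (map Ln t) = FN P t.
Proof.
elim: t P => [|[n b] t IH] P //= /andP [hn ht].
by rewrite /Fperm /= inordK // -/(Fperm _ _) IH.
Qed.

Lemma okE t : all (fun l => l.1 < 4) t -> okP (map Ln t) = okN t.
Proof.
move=> h; rewrite /okP /okN FE // /nneg /npos !count_map.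
by [].
Qed.

Lemma lwW s1 s2 :
  all (fun i => all (fun l => l.1 < 4) (winvN (Pn (s1 ++ [:: i])) ++ Pn DeltaW)
       && all (fun l => l.1 < 4) (winvN (Pn [:: i]) ++ Pn s2)
       && ~~ (okN (winvN (Pn (s1 ++ [:: i])) ++ Pn DeltaW)
             && okN (winvN (Pn [:: i]) ++ Pn s2))) (iota 0 4) ->
  left_weighted (W s1) (W s2).
Proof.
move=> /allP h g [[_ H1] [H2 _]].
have /h : nat_of_ord g \in iota 0 4 by rewrite mem_iota ltn_ord.
case/andP=> /andP [a1 a2].
have eg : [:: pos g] = W [:: nat_of_ord g] by rewrite /W /= /posn inord_val.
move: H1 H2; rewrite /prec eg DeltaE /W -map_cat -/(W _) -/(W DeltaW) !WE winvE -map_cat.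
move=> /okP_pos H1 /okP_pos H2.
rewrite okE // in H1.
have H3 : okN (winvN (Pn [:: nat_of_ord g]) ++ Pn s2).
  by rewrite -okE // map_cat -winvE -!WE; exact: H2.
by rewrite H1 H3.
Qed.

Ltac lwtac := apply: lwW; by vm_compute.

Lemma lwAA : left_weighted (W fA) (W fA). Proof. lwtac. Qed.
Lemma lwAB : left_weighted (W fA) (W fB). Proof. lwtac. Qed.
Lemma lwBC : left_weighted (W fB) (W fC). Proof. lwtac. Qed.
Lemma lwCD : left_weighted (W fC) (W fD). Proof. lwtac. Qed.
Lemma lwDD : left_weighted (W fD) (W fD). Proof. lwtac. Qed.

Lemma wpowS w n : wpow w n.+1 = w ++ wpow w n. Proof. by []. Qed.
Lemma wpow0 w : wpow w 0 = [::]. Proof. by []. Qed.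

Lemma wpowD w m n : wpow w (m + n) = wpow w m ++ wpow w n.
Proof. by elim: m => [|m IH] //=; rewrite addSn wpowS IH catA. Qed.

Lemma wpowM w m n : wpow w (m * n) = wpow (wpow w m) n.
Proof. by elim: n => [|n IH]; rewrite ?muln0 // mulnS wpowD IH. Qed.

Lemma beq_wpow u v n : beq u v -> beq (wpow u n) (wpow v n).
Proof.
move=> h; elim: n => [|n IH]; first exact: beq_refl.
exact: beq_cat h IH.
Qed.

Lemma comm_wpow a b n : beq (a ++ b) (b ++ a) -> beq (wpow a n ++ b) (b ++ wpow a n).
Proof.
move=> h; elim: n => [|n IH]; first by rewrite /= cats0; exact: beq_refl.
rewrite wpowS -catA IH catA h -catA; reflexivity.
Qed.

Lemma wpow_prod a b n : beq (a ++ b) (b ++ a) ->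
  beq (wpow a n ++ wpow b n) (wpow (a ++ b) n).
Proof.
move=> h; elim: n => [|n IH]; first exact: beq_refl.
rewrite !wpowS -!catA (catA (wpow a n)) (comm_wpow _ h) -!catA IH.
exact: beq_refl.
Qed.

Lemma helper (X Y Z R d T3 P Q : word) :
  beq (d ++ Y) (Y ++ d) -> beq (X ++ Y) P -> beq (d ++ R ++ T3 ++ R ++ Z) (Q ++ Z) ->
  beq ((X ++ d) ++ (Y ++ R) ++ T3 ++ R ++ Z) (P ++ Q ++ Z).
Proof.
move=> h1 h2 h3.
rewrite -(catA X d) -(catA Y R) (catA d Y) h1 -catA catA h2.
exact: beq_cat (beq_refl P) h3.
Qed.

Lemma main_eq k : 2 <= k -> beq (beta k) (Delta_pow 0 ++ flatten (beta_factors k)).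
Proof.
move=> hk.
have -> : Delta_pow 0 = [::] by [].
have e1 : beq (wpow delta3 3) (wpow Delta3 2) := I1.
have e2 : beq (Delta3 ++ sg 4) (sg 4 ++ Delta3) := I2.
have e3 : beq (sg 4 ++ delta3) (delta3 ++ sg 4) := beq_sym I3.
have E : 2 * k - 1 = 2 + (2 * k - 3) by lia.
rewrite /beta /beta_factors !flatten_cat cat0s.
change (flatten (nseq (2 * k) (Delta3 ++ sg 4))) with (wpow (Delta3 ++ sg 4) (2 * k)).
change (flatten (nseq (2 * k - 3) (sg 4))) with (wpow (sg 4) (2 * k - 3)).
rewrite (wpowD delta3 (3*k) 1) (wpowM delta3 3 k) (beq_wpow k e1) -(wpowM Delta3 2 k).
rewrite (wpowD (sg 4) (2*k) 2) E (wpowD (sg 4) 2 (2*k-3)).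
have -> : wpow delta3 1 = delta3 by [].
apply: (helper (beq_sym (comm_wpow _ e3)) (wpow_prod _ e2)).
change (beq (W [:: 1; 0; 3; 3; 2; 3; 3] ++ wpow (sg 4) (2 * k - 3))
            (W [:: 1; 0; 3; 2; 3; 2; 3] ++ wpow (sg 4) (2 * k - 3))).
exact: beq_cat I4 (beq_refl _).
Qed.

Lemma nthF (a b c d : word) n m i :
  nth [::] (nseq n a ++ [:: b; c] ++ nseq m d) i =
  if i < n then a else if i == n then b else if i == n.+1 then c
  else if i < n + 2 + m then d else [::].
Proof.
rewrite nth_cat size_nseq; case: ltnP => h1; first by rewrite nth_nseq h1.
have [j ->] : exists j, i = n + j by exists (i - n); lia.
rewrite addKn.
case: j => [|[|j]].
- by rewrite addn0 eqxx.
- by rewrite addn1 eqxx (gtn_eqF (ltnSn n)).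
- rewrite /= nth_nseq.
  have -> : (n + j.+2 == n) = false by lia.
  have -> : (n + j.+2 == n.+1) = false by lia.
  have -> : (n + j.+2 < n + 2 + m) = (j < m) by lia.
  by [].
Qed.

Unset Implicit Arguments.

Theorem mainTheorem2 (k : nat) (hk : (2 <= k)%N) :
  is_LNF (beta k) 0%Z (beta_factors k) /\
  has_inf (beta k) 0%Z /\ has_sup (beta k) (4 * k - 1)%N%:Z.
Proof.
have L : is_LNF (beta k) 0%Z (beta_factors k).
  split; first exact: main_eq.
  have eA : Delta3 ++ sg 4 = W fA by [].
  have eB : delta3 ++ sg 4 ++ sg 3 ++ sg 4 = W fB by [].
  have eC : sg 3 ++ sg 4 = W fC by [].
  have eD : sg 4 = W fD by [].
  rewrite /beta_factors eA eB eC eD.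
  split.
    move=> s; rewrite !mem_cat !mem_nseq !inE.
    case/or3P => [/andP [_ /eqP ->]| /orP [/eqP ->|/eqP ->] | /andP [_ /eqP ->]].
    - exact: goodA.
    - exact: goodB.
    - exact: goodC.
    - exact: goodD.
  move=> i; rewrite !size_cat !size_nseq /= => hi.
  rewrite !nthF.
  have hm : 0 < 2 * k - 3 by lia.
  repeat case: ifP => /=;
  (try move=> /eqP); (try move=> /eqP); (try move=> /eqP); (try move=> /eqP); intros;
  first [ exact: lwAA | exact: lwAB | exact: lwBC | exact: lwCD | exact: lwDD | (exfalso; lia) ].
split; first exact: L.
split; first by exists (beta_factors k).
exists 0%Z, (beta_factors k); split; first exact: L.
rewrite /beta_factors !size_cat !size_nseq /= GRing.add0r.
congr Posz; lia.
Qed.
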